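(* If $S$ is countable, then $\Omega(\phi)\in\mathcal A_\delta$ for every $\phi\in\mathcal H$.
   Context: Let $\mathcal H$ be a complex Hilbert space. A projection is a bounded self-adjoint idempotent operator; $\wedge_\alpha p_\alpha$ is the projection onto the intersection of ranges. Let $S$ be a set; for each $t\in S$ let $\Gamma(t)$ be a countable set and for $a\in\Gamma(t)$ let $p^t_a$ be a projection on $\mathcal H$ with $\sum_{a\in\Gamma(t)}p^t_a=I$ (strong convergence). Let $p^{t_1,\dots,t_k}_{a_1,\dots,a_k}=\wedge_{i=1}^kp^{t_i}_{a_i}$. Let $\Omega=\prod_{t\in S}\Gamma(t)$, $X_t(\omega)=\omega_t$, $\mathcal A$ the algebra of events $\{(X_{t_1},\dots,X_{t_k})\in G\}$ with $t_i\in S$ and $G\subset\Gamma(t_1)\times\dots\times\Gamma(t_k)$, and $\mathcal A_\delta$ the family of countable intersections of events in $\mathcal A$. For $\phi\in\mathcal H$, $\Omega(\phi)=\{\omega\in\Omega:$ for all $t_1,\dots,t_k\in S$, $p^{t_1,\dots,t_k}_{\omega_{t_1},\dots,\omega_{t_k}}\phi\neq0\}$. *)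

(* Defs.v *)
From mathcomp Require Import all_boot all_order all_algebra.
From mathcomp Require Export complex.
From mathcomp Require Export all_classical all_reals.
Export GRing.Theory Num.Theory.

Set Implicit Arguments.
Unset Strict Implicit.
Unset Printing Implicit Defensive.

Local Open Scope ring_scope.
Local Open Scope classical_set_scope.

Section Hilbert.
Variables (R : realType) (H : lmodType R[i]) (ip : H -> H -> R[i]).

Definition inner_product : Prop :=
  [/\ forall (a : R[i]) (x y z : H), ip (a *: x + y) z = a * ip x z + ip y z,
      forall x y, ip y x = (ip x y)^*,
      forall x, 0 <= ip x x
    & forall x, ip x x = 0 -> x = 0].

Definition hnorm (x : H) : R[i] := sqrtC (ip x x).

Definition complete_ip : Prop :=
  forall u : nat -> H,
    (forall e : R[i], 0 < e -> exists N, forall m n, (N <= m)%N -> (N <= n)%N ->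
        hnorm (u m - u n) < e) ->
    exists l : H, forall e : R[i], 0 < e -> exists N, forall n, (N <= n)%N ->
        hnorm (u n - l) < e.

Definition hilbert_space : Prop := inner_product /\ complete_ip.

Definition projection (p : H -> H) : Prop :=
  [/\ forall (a : R[i]) (x y : H), p (a *: x + y) = a *: p x + p y,
      exists M : R[i], forall x, hnorm (p x) <= M * hnorm x,
      forall x y, ip (p x) y = ip x (p y)
    & forall x, p (p x) = p x].

(* q = /\_{i<k} ps i : the projection onto the intersection of the ranges
   (the range of a projection is its set of fixed points) *)
Definition is_meet k (ps : 'I_k -> H -> H) (q : H -> H) : Prop :=
  projection q /\ forall x, q x = x <-> (forall i, ps i x = x).

(* family of projections (p_a)_{a in G} with sum_a p_a = I, strongly
   (unconditional convergence over finite subsets of the countable set G) *)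
Definition resolution_of_identity (G : countType) (p : G -> H -> H) : Prop :=
  (forall a, projection (p a)) /\
  forall (x : H) (e : R[i]), 0 < e -> exists s0 : seq G,
    forall s : seq G, uniq s -> {subset s0 <= s} ->
      hnorm (x - \sum_(a <- s) p a x) < e.

End Hilbert.

Section Events.
Variables (S : Type) (Gamma : S -> countType).

(* Omega = prod_{t in S} Gamma(t) ; X_t omega = omega t *)
Definition Omega := forall t : S, Gamma t.

Definition event_A (E : set Omega) : Prop :=
  exists (k : nat) (ts : 'I_k -> S) (G : set (forall i : 'I_k, Gamma (ts i))),
    E = [set w : Omega | G (fun i => w (ts i))].

Definition event_A_delta (E : set Omega) : Prop :=
  exists F : nat -> set Omega, (forall n, event_A (F n)) /\
    E = \bigcap_n F n.

Definition Omega_phi (R : realType) (H : lmodType R[i]) (ip : H -> H -> R[i])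
  (p : forall t : S, Gamma t -> H -> H) (phi : H) : set Omega :=
  [set w : Omega | forall (k : nat) (ts : 'I_k.+1 -> S) (q : H -> H),
     is_meet ip (fun i => p (ts i) (w (ts i))) q -> q phi <> 0].

End Events.

(* Main.v *)
Require Import Defs.
From mathcomp Require Import all_boot all_order all_algebra.
From mathcomp Require Import complex all_classical all_reals.
Local Open Scope ring_scope.
Local Open Scope classical_set_scope.

Theorem lemma5 (R : realType) (H : lmodType R[i]) (ip : H -> H -> R[i])
  (S : Type) (Gamma : S -> countType) (p : forall t : S, Gamma t -> H -> H) :
  hilbert_space ip ->
  (forall t : S, resolution_of_identity ip (p t)) ->
  countable [set: S] ->
  forall phi : H, event_A_delta (Omega_phi ip p phi).
Proof.
move=> _ _ /countable_injP [f injf] phi.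
have finj : injective f by move=> x y; apply: injf; rewrite inE.
pose c (k : nat) (ts : 'I_k.+1 -> S) : nat :=
  pickle [seq f (ts i) | i <- enum 'I_k.+1].
pose P (k : nat) (ts : 'I_k.+1 -> S) (w : Omega Gamma) : Prop :=
  forall q : H -> H, is_meet ip (fun i => p (ts i) (w (ts i))) q -> q phi <> 0.
have cinj : forall k ts k' ts', c k ts = c k' ts' ->
    exists e : k = k', ts' = eq_rect k (fun k => 'I_k.+1 -> S) ts k' e.
  move=> k ts k' ts' /(pcan_inj pickleK) E.
  have Ek : k = k'.
    by have := congr1 size E; rewrite !size_map -!enumT !size_enum_ord => -[].
  subst k'; exists erefl => /=; apply: funext => i.
  have := congr1 (fun s => nth 0%N s i) E.
  have Hs : size (Finite.enum 'I_k.+1) = k.+1 by have := size_enum_ord k.+1; rewrite enumT.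
  rewrite ?enumT !(nth_map ord0) ?Hs ?size_enum_ord ?ltn_ord //.
  have E2 : nth ord0 (enum 'I_k.+1) i = i by apply: val_inj; rewrite /= nth_enum_ord.
  rewrite enumT in E2; rewrite E2.
  by move/finj ->.
rewrite /event_A_delta.
exists (fun n : nat => [set w : Omega Gamma | forall k (ts : 'I_k.+1 -> S), c k ts = n -> P k ts w]); split.
  move=> n.
  have [[k0 [ts0 e0]]|nex] := pselect (exists k ts, c k ts = n).
    exists k0.+1, ts0, [set v | forall q : H -> H,
       is_meet ip (fun i => p (ts0 i) (v i)) q -> q phi <> 0].
    apply/seteqP; split => w /=.
      by move=> h; apply: h.
    move=> h k ts e; rewrite -e0 in e.
    have [ek ets] := cinj _ _ _ _ e; subst k0 => /=.
    by rewrite /= in ets; subst ts0.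
  exists 0%N, (fun i : 'I_0 => False_rect S (ltac:(by case: i))), setT.
  apply/seteqP; split => w //= _ k ts e.
  by exfalso; apply: nex; exists k, ts.
apply/seteqP; split => w /=.
  by move=> h n _ k ts _; apply: h.
by move=> h k ts; apply: (h (c k ts)).
Qed.
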